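(* Let $\mathcal A=\sum_{\alpha\in I_N}\langle\mathbf A_\alpha(\mathbf k,\mathbf x_\alpha)\cdot\rangle_\alpha$ be an operator on $L^2([0,1)^N,\mathbb C^M)$ with $h$-staircase $M\times M$ matrix coefficients $\mathbf A_\alpha$. If $\mathcal A=0$ then $\mathbf A_\alpha=0$ for all $\alpha\in I_N$; i.e. the representation of an operator in this form is unique.
   Context: Let $N,M,p$ be positive integers and $h=1/p$. $I_N$ is the set of all subsets of $\{1,\dots,N\}$; for $\alpha\in I_N$, $|\alpha|$ is its cardinality and $\bar\alpha$ its complement. For $\mathbf x=(x_i)$, $\mathbf x_\alpha=(x_i)_{i\in\alpha}\in[0,1)^{|\alpha|}$ (increasing indices). For disjoint $\alpha,\beta$, $\mathbf y_\beta\diamond\mathbf x_\alpha=\mathbf z_{\alpha\cup\beta}$ with $z_i=x_i$ for $i\in\alpha$, $z_i=y_i$ for $i\in\beta$. $\langle f\rangle_\alpha=\int_{[0,1)^{|\alpha|}}f\,d\mathbf x_\alpha$, $\langle f\rangle_\emptyset=f$. $\chi^h_i$ is the indicator of $[i/p,(i+1)/p)$; a function on $[0,1)^R$ is $h$-staircase if it is a finite linear combination of $\prod_{j=1}^R\chi^h_{i_j}(y_j)$, a matrix function is $h$-staircase if all entries are. For an $h$-staircase $\mathbf A(\mathbf k,\mathbf x_\alpha)$ on $[0,1)^N\times[0,1)^{|\alpha|}$, $\langle\mathbf A(\mathbf k,\mathbf x_\alpha)\cdot\rangle_\alpha$ denotes the operator $\mathbf u\mapsto\langle\mathbf A(\mathbf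 k,\mathbf x_\alpha)\mathbf u(\mathbf k_{\bar\alpha}\diamond\mathbf x_\alpha)\rangle_\alpha$ (multiplication by $\mathbf A(\mathbf k)$ if $\alpha=\emptyset$). *)

(* Defs.v *)
From HB Require Import structures.
From mathcomp Require Import all_boot all_order all_algebra.
From mathcomp Require Import complex.
From mathcomp Require Import all_classical all_reals all_analysis.
Set Implicit Arguments. Unset Strict Implicit. Unset Printing Implicit Defensive.
Import Order.TTheory GRing.Theory Num.Theory.
Local Open Scope ring_scope.
Local Open Scope classical_set_scope.

Section Defs.
Variable R : realType.

Definition in_cube n (y : n.-tuple R) : Prop :=
  forall j : 'I_n, 0 <= tnth y j < 1.

(* chi^h_i with h = 1/p : indicator of [i/p, (i+1)/p) *)
Definition chi (p i : nat) (t : R) : R[i] :=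
  if (i%:R / p%:R <= t) && (t < i.+1%:R / p%:R) then 1 else 0.

(* a complex function of (k, x) in [0,1)^n x [0,1)^m is h-staircase:
   a finite linear combination of products of chi^h_{i_j}(y_j) over all
   n + m coordinates y = (k, x) (indices i_j in {0,..,p-1}; indicators
   with other indices vanish on [0,1)). *)
Definition staircase (p n m : nat) (f : n.-tuple R -> m.-tuple R -> R[i]) : Prop :=
  exists c : n.-tuple 'I_p -> m.-tuple 'I_p -> R[i],
    forall k x, in_cube k -> in_cube x ->
      f k x = \sum_(ii : n.-tuple 'I_p) \sum_(jj : m.-tuple 'I_p)
                c ii jj * (\prod_(j < n) chi p (tnth ii j) (tnth k j))
                        * (\prod_(j < m) chi p (tnth jj j) (tnth x j)).

Definition mx_staircase (p n m M : nat)
    (A : n.-tuple R -> m.-tuple R -> 'M[R[i]]_M) : Prop :=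
  forall i j : 'I_M, staircase p (fun k x => A k x i j).

Fixpoint riint (n : nat) : (n.-tuple R -> R) -> R :=
  match n return (n.-tuple R -> R) -> R with
  | 0 => fun f => f [tuple]
  | m.+1 => fun f =>
      Rintegral (@lebesgue_measure R) `[0%R, 1%R[
        (fun t => riint (fun y : m.-tuple R => f (cons_tuple t y)))
  end.

Fixpoint eiint (n : nat) : (n.-tuple R -> \bar R) -> \bar R :=
  match n return (n.-tuple R -> \bar R) -> \bar R with
  | 0 => fun f => f [tuple]
  | m.+1 => fun f =>
      (\int[@lebesgue_measure R]_(t in `[0%R, 1%R[)
        eiint (fun y : m.-tuple R => f (cons_tuple t y)))%E
  end.

Definition cint (n : nat) (f : n.-tuple R -> R[i]) : R[i] :=
  Complex (riint (fun x => complex.Re (f x))) (riint (fun x => complex.Im (f x))).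

(* y_{bar alpha} <> x_alpha : coordinates in alpha (in increasing order)
   taken from x, the others from k *)
Definition diamond (N : nat) (alpha : {set 'I_N}) (k : N.-tuple R)
    (x : #|alpha|.-tuple R) : N.-tuple R :=
  [tuple (if i \in alpha then nth 0 x (index i (enum alpha)) else tnth k i)
   | i < N].

Definition opA (N M : nat)
    (A : forall alpha : {set 'I_N}, N.-tuple R -> #|alpha|.-tuple R -> 'M[R[i]]_M)
    (u : N.-tuple R -> 'I_M -> R[i]) (k : N.-tuple R) (i : 'I_M) : R[i] :=
  \sum_(alpha : {set 'I_N})
     cint (fun x : #|alpha|.-tuple R =>
             \sum_(j < M) A alpha k x i j * u (diamond k x) j).

Definition sqnorm (M : nat) (v : 'I_M -> R[i]) : R :=
  \sum_(i < M) (complex.Re (v i) ^+ 2 + complex.Im (v i) ^+ 2).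

Definition inL2 (N M : nat) (u : N.-tuple R -> 'I_M -> R[i]) : Prop :=
  (forall i : 'I_M,
      measurable_fun [set: N.-tuple R] (fun k => complex.Re (u k i)) /\
      measurable_fun [set: N.-tuple R] (fun k => complex.Im (u k i))) /\
  (eiint (fun k => (sqnorm (u k))%:E) < +oo)%E.

End Defs.

(* Main.v *)
Require Import Defs.
From HB Require Import structures.
From mathcomp Require Import all_boot all_order all_algebra.
From mathcomp Require Import complex.
From mathcomp Require Import all_classical all_reals all_analysis.
From mathcomp Require Import measurable_realfun.
From mathcomp Require Import ring lra zify.
Import Order.TTheory GRing.Theory Num.Theory.
Set Implicit Arguments. Unset Strict Implicit. Unset Printing Implicit Defensive.
Local Open Scope ring_scope.
Section S.
Variable R : realType.
Definition chiR (q a : nat) (t : R) : R :=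
  if (a%:R / q%:R <= t) && (t < a.+1%:R / q%:R) then 1 else 0.

Lemma chiE p i t : chi p i t = Complex (chiR p i t) 0.
Proof. by rewrite /chi /chiR; case: ifP. Qed.

Lemma chiR_ge0 q a t : 0 <= chiR q a t.
Proof. by rewrite /chiR; case: ifP. Qed.
Lemma chiR_le1 q a t : chiR q a t <= 1.
Proof. by rewrite /chiR; case: ifP. Qed.
Lemma chiR01 q a t : chiR q a t = 0 \/ chiR q a t = 1.
Proof. by rewrite /chiR; case: ifP; auto. Qed.

Lemma chiR_mul q a b t : (0 < q)%N ->
  chiR q a t * chiR q b t = if a == b then chiR q a t else 0.
Proof.
move=> q0; case: eqP => [->|/eqP ab].
  by case: (chiR01 q b t) => ->; rewrite ?mulr0 ?mulr1.
have qR : 0 < (q%:R : R) by rewrite ltr0n.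
wlog lt_ab : a b ab / (a < b)%N.
  move=> H; case: (ltngtP a b) => [h|h|h]; first exact: H.
    by rewrite mulrC; apply: H => //; rewrite eq_sym.
  by rewrite h eqxx in ab.
rewrite /chiR; case: ifP => [/andP[h1 h2]|]; last by rewrite mul0r.
case: ifP => [/andP[h3 h4]|]; last by rewrite mulr0.
have : a.+1%:R / q%:R <= b%:R / q%:R :> R.
  by rewrite ler_pM2r ?invr_gt0 // ler_nat.
lra.
Qed.

Lemma chiR_split p m t : (0 < p)%N ->
  chiR p m t = chiR (2 * p) (2 * m) t + chiR (2 * p) (2 * m).+1 t.
Proof.
move=> p0.
have pR : 0 < (p%:R : R) by rewrite ltr0n.
have e1 : ((2 * m)%:R / (2 * p)%:R : R) = m%:R / p%:R.
  by rewrite !natrM -mulf_div divff ?mul1r // pnatr_eq0.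
have e2 : ((2 * m).+2%:R / (2 * p)%:R : R) = m.+1%:R / p%:R.
  rewrite -addn2 -[(2 * m + 2)%N]mulnSr.
  by rewrite !natrM -mulf_div divff ?mul1r // pnatr_eq0.
have l1 : (m%:R / p%:R : R) <= (2 * m).+1%:R / (2 * p)%:R.
  by rewrite -e1 ler_pM2r ?invr_gt0 ?ltr0n ?muln_gt0 // ler_nat.
have l2 : ((2 * m).+1%:R / (2 * p)%:R : R) <= m.+1%:R / p%:R.
  by rewrite -e2 ler_pM2r ?invr_gt0 ?ltr0n ?muln_gt0 // ler_nat.
rewrite /chiR e1 e2.
move: l1 l2; set L := (m%:R / p%:R); set Mi := _ / _; set U := _ / p%:R.
move=> l1 l2.
case: (lerP L t) => h1; case: (ltrP t Mi) => h2; case: (lerP Mi t) => h3;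
 case: (ltrP t U) => h4 /=; rewrite ?addr0 ?add0r //; lra.
Qed.

Lemma chiR_cell p t : (0 < p)%N -> 0 <= t < 1 -> exists m : 'I_p, chiR p m t = 1.
Proof.
move=> p0 /andP[t0 t1].
have pR : 0 < (p%:R : R) by rewrite ltr0n.
have tp0 : 0 <= t * p%:R by rewrite mulr_ge0 // ltW.
have /andP[h1 h2] := truncn_itv tp0.
have mp : (Num.truncn (t * p%:R) < p)%N.
  rewrite -(ltr_nat R); apply: (le_lt_trans h1).
  by rewrite -[X in _ < X]mul1r ltr_pM2r.
exists (Ordinal mp) => /=; rewrite /chiR.
by rewrite ler_pdivrMr // ltr_pdivlMr // h1 h2.
Qed.
Local Open Scope classical_set_scope.
Local Notation mu := (@lebesgue_measure R).
Local Notation I01 := (`[(0:R), (1:R)[ : set (measurableTypeR R)).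

Lemma chiR_indic q a : chiR q a = \1_(`[a%:R / q%:R, a.+1%:R / q%:R[ : set R).
Proof.
apply/funext => t; rewrite indicE /chiR; rewrite (_ : (t \in _) = ((a%:R / q%:R <= t) && (t < a.+1%:R / q%:R))); first by case: ifP.
by apply/idP/idP; rewrite inE /= in_itv.
Qed.

Lemma mI01 : measurable I01.
Proof. exact: measurable_itv. Qed.

Lemma mchiR q a : measurable_fun setT (chiR q a).
Proof. by rewrite chiR_indic; apply: measurable_indic; exact: measurable_itv. Qed.

Lemma int_chiR q a : mu.-integrable I01 (EFin \o chiR q a).
Proof.
apply: measurable_bounded_integrable.
- exact: mI01.
- have h := @lebesgue_measure_itv R `[0, 1[%R; move: h => /=; rewrite lte01 EFinN sube0 => h.
  by rewrite h ltry.
- exact: measurable_funS (mchiR q a).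
- exists 1; split => // x x1 y _ /=; rewrite ger0_norm ?chiR_ge0 //.
  by apply: le_trans (chiR_le1 _ _ _) (ltW x1).
Qed.

Lemma Rint_chiR q a : (0 < q)%N -> (a < q)%N ->
  \int[mu]_(t in I01) chiR q a t = q%:R^-1.
Proof.
move=> q0 aq; have qR : 0 < (q%:R : R) by rewrite ltr0n.
rewrite /Rintegral chiR_indic integral_indic; last exact: measurable_itv.
have -> : `[a%:R / q%:R, a.+1%:R / q%:R[ `&` I01 = `[a%:R / q%:R, a.+1%:R / q%:R[.
  apply/seteqP; split => t; last first.
    move=> /= h; split => //; move: h; rewrite /= !in_itv /= => /andP[h1 h2].
    have : 0 <= a%:R / q%:R :> R by rewrite divr_ge0.
    have : a.+1%:R / q%:R <= 1 :> R by rewrite ler_pdivrMr // mul1r ler_nat.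
    move=> ? ?; apply/andP; split; lra.
  by move=> [].
have h := @lebesgue_measure_itv R `[a%:R / q%:R, a.+1%:R / q%:R[%R; move: h => /= ->.
rewrite lte_fin ltr_pM2r ?invr_gt0 // ltr_nat ltnSn /=.
  by rewrite -mulrBl -natrB // subSnn mul1r.
exact: measurable_itv.
Qed.

Lemma Rint_sum (I : finType) (F : I -> R -> R) :
  (forall r, mu.-integrable I01 (EFin \o F r)) ->
  \int[mu]_(t in I01) (\sum_r F r t) = \sum_r \int[mu]_(t in I01) F r t.
Proof.
move=> hF; rewrite /Rintegral.
under eq_integral do rewrite -sumEFin.
rewrite (@integral_sum _ _ _ mu _ mI01 _ (fun r t => (F r t)%:E) hF).
rewrite sum_fine // => r _; exact: (integrable_fin_num mI01 (hF r)).
Qed.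

Lemma RintZl f (r : R) : mu.-integrable I01 (EFin \o f) ->
  \int[mu]_(t in I01) (r * f t) = r * \int[mu]_(t in I01) f t.
Proof. by move=> h; apply: RintegralZl => //; exact: mI01. Qed.

Lemma int_scale f (k : R) : mu.-integrable I01 (EFin \o f) ->
  mu.-integrable I01 (EFin \o (fun t => k * f t)).
Proof.
move=> h; have := integrableZl mI01 k h.
by apply: eq_integrable => // t _ /=; rewrite EFinM.
Qed.

Lemma tnth_cons0 n (t : R) (y : n.-tuple R) : tnth (cons_tuple t y) ord0 = t.
Proof. by rewrite (tnth_nth 0). Qed.

Lemma tnth_consS n (t : R) (y : n.-tuple R) (j : 'I_n) :
  tnth (cons_tuple t y) (lift ord0 j) = tnth y j.
Proof. by rewrite !(tnth_nth 0). Qed.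

Lemma in_cube_cons n (t : R) (y : n.-tuple R) :
  in_cube (cons_tuple t y) <-> (0 <= t < 1) /\ in_cube y.
Proof.
split.
  move=> h; split; first by have := h ord0; rewrite tnth_cons0.
  by move=> j; have := h (lift ord0 j); rewrite tnth_consS.
move=> [h1 h2] j; case: (unliftP ord0 j) => [j'|] ->.
  by rewrite tnth_consS.
by rewrite tnth_cons0.
Qed.

Lemma in_cube0 (y : 0.-tuple R) : in_cube y.
Proof. by case. Qed.

Lemma tuple0E (y : 0.-tuple R) : y = [tuple].
Proof. by rewrite tuple0. Qed.

Lemma riint_eq n (f g : n.-tuple R -> R) :
  (forall y, in_cube y -> f y = g y) -> riint f = riint g.
Proof.
elim: n f g => [|n IH] f g h /=; first by apply: h; exact: in_cube0.
apply: eq_Rintegral => t; rewrite inE /= in_itv /= => ht.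
apply: IH => y hy; apply: h; exact/in_cube_cons.
Qed.

Lemma riint_prod n (I : finType) (c : I -> R) (phi : I -> 'I_n -> R -> R) :
  (forall r l, mu.-integrable I01 (EFin \o phi r l)) ->
  riint (fun y => \sum_r c r * \prod_l phi r l (tnth y l)) =
  \sum_r c r * \prod_l \int[mu]_(t in I01) phi r l t.
Proof.
elim: n c phi => [|n IH] c phi hphi /=.
  by apply: eq_bigr => r _; rewrite !big_ord0.
set K := fun r => \prod_(l < n) \int[mu]_(t in I01) phi r (lift ord0 l) t.
have e : forall t, riint (fun y : n.-tuple R =>
      \sum_r c r * \prod_(l < n.+1) phi r l (tnth (cons_tuple t y) l)) =
    \sum_r (c r * phi r ord0 t * K r).
  move=> t; rewrite -(IH (fun r => c r * phi r ord0 t)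
     (fun r l => phi r (lift ord0 l))); last by move=> r l; exact: hphi.
  congr riint; apply/funext => y; apply: eq_bigr => r _.
  rewrite big_ord_recl tnth_cons0 mulrA; congr (_ * _).
  by apply: eq_bigr => l _; rewrite tnth_consS.
under eq_Rintegral do rewrite e.
rewrite Rint_sum; last first.
  move=> r; have := int_scale (c r * K r) (hphi r ord0).
  by apply: eq_integrable => // t _ /=; congr EFin; ring.
apply: eq_bigr => r _.
under eq_Rintegral => t _ do rewrite mulrAC.
rewrite RintZl; [|exact: hphi].
by rewrite big_ord_recl /K; ring.
Qed.

Notation rc := (real_complex R).

Lemma rcE (x : R) : rc x = Complex x 0. Proof. by []. Qed.

Lemma Re_sum (I : finType) (F : I -> R[i]) : complex.Re (\sum_r F r) = \sum_r complex.Re (F r).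
Proof. by apply: (big_morph (@complex.Re R)) => // [[a b] [c d]]. Qed.
Lemma Im_sum (I : finType) (F : I -> R[i]) : complex.Im (\sum_r F r) = \sum_r complex.Im (F r).
Proof. by apply: (big_morph (@complex.Im R)) => // [[a b] [c d]]. Qed.

Lemma complex_ext (z w : R[i]) : complex.Re z = complex.Re w -> complex.Im z = complex.Im w -> z = w.
Proof. by case: z; case: w => /= a b c d -> ->. Qed.

Lemma Re_mul_rc (z : R[i]) x : complex.Re (z * rc x) = complex.Re z * x.
Proof. by case: z => a b /=; rewrite mulr0 subr0. Qed.
Lemma Im_mul_rc (z : R[i]) x : complex.Im (z * rc x) = complex.Im z * x.
Proof. by case: z => a b /=; rewrite mulr0 add0r. Qed.

Lemma cint_eq n (f g : n.-tuple R -> R[i]) :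
  (forall y, in_cube y -> f y = g y) -> cint f = cint g.
Proof.
move=> h; rewrite /cint; congr Complex; apply: riint_eq => y hy; by rewrite h.
Qed.

Lemma riint0 n : riint (fun _ : n.-tuple R => 0) = 0.
Proof.
elim: n => [|n IH] //=.
under eq_Rintegral do rewrite IH.
by rewrite Rintegral_cst ?mul0r //; exact: mI01.
Qed.

Lemma cint0 n (f : n.-tuple R -> R[i]) : (forall y, in_cube y -> f y = 0) -> cint f = 0.
Proof.
move=> h; rewrite (cint_eq h) /cint.
have e1 : (fun _ : n.-tuple R => complex.Re (0 : R[i])) = (fun _ => 0) by [].
have e2 : (fun _ : n.-tuple R => complex.Im (0 : R[i])) = (fun _ => 0) by [].
by rewrite e1 riint0.
Qed.

Lemma cint_prod n (I : finType) (C : I -> R[i]) (phi : I -> 'I_n -> R -> R) :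
  (forall r l, mu.-integrable I01 (EFin \o phi r l)) ->
  cint (fun y => \sum_r C r * rc (\prod_l phi r l (tnth y l))) =
  \sum_r C r * rc (\prod_l \int[mu]_(t in I01) phi r l t).
Proof.
move=> hphi; rewrite /cint; apply: complex_ext => /=.
  rewrite Re_sum; under eq_bigr do rewrite Re_mul_rc.
  rewrite -riint_prod //; congr riint; apply/funext => y.
  by rewrite Re_sum; under eq_bigr do rewrite Re_mul_rc.
rewrite Im_sum; under eq_bigr do rewrite Im_mul_rc.
rewrite -riint_prod //; congr riint; apply/funext => y.
by rewrite Im_sum; under eq_bigr do rewrite Im_mul_rc.
Qed.

Lemma index_enum_val N (a : {set 'I_N}) (l : 'I_#|a|) :
  index (enum_val l) (enum a) = l.
Proof.
rewrite (enum_val_nth (enum_val l)) index_uniq ?enum_uniq //.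
by rewrite -cardE ltn_ord.
Qed.

Lemma diamond_prod N (a : {set 'I_N}) (k : N.-tuple R) (x : #|a|.-tuple R)
    (F : 'I_N -> R -> R) :
  \prod_(i < N) F i (tnth (diamond k x) i) =
  (\prod_(i < N | i \notin a) F i (tnth k i)) *
  \prod_(l < #|a|) F (enum_val l) (tnth x l).
Proof.
rewrite (bigID (mem a)) /= mulrC; congr (_ * _).
  by apply: eq_bigr => i hi; rewrite tnth_mktuple (negbTE hi).
rewrite (eq_bigr (fun i => F i (nth 0 x (index i (enum a))))); last first.
  by move=> i hi; rewrite tnth_mktuple hi.
rewrite big_enum_val /=.
by apply: eq_bigr => l _; rewrite index_enum_val (tnth_nth 0).
Qed.

Definition cellR (p : nat) (s t : R) : R := \sum_(m < p) chiR p m s * chiR p m t.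
Definition gR (p : nat) (t : R) : R :=
  \sum_(m < p) (chiR (2 * p) (2 * m) t - chiR (2 * p) (2 * m).+1 t).

Lemma sum_delta (I : finType) (m : I) (F : I -> R) :
  \sum_(m' : I) (if m == m' then F m' else 0) = F m.
Proof.
rewrite (bigD1 m) //= eqxx big1 ?addr0 // => m' hm'.
by rewrite eq_sym (negbTE hm').
Qed.

Lemma chiR_cellR p (m : 'I_p) s t : (0 < p)%N ->
  chiR p m t * cellR p s t = chiR p m s * chiR p m t.
Proof.
move=> p0; rewrite /cellR mulr_sumr.
rewrite -(sum_delta m (fun m' : 'I_p => chiR p m' s * chiR p m' t)).
apply: eq_bigr => m' _; rewrite mulrCA chiR_mul //.
case: (m =P m') => [->|h]; first by rewrite eqxx.
by rewrite ifF ?mulr0 //; apply/eqP => /val_inj.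
Qed.

Lemma chiR_gR p (m : 'I_p) t : (0 < p)%N ->
  chiR p m t * gR p t = chiR (2 * p) (2 * m) t - chiR (2 * p) (2 * m).+1 t.
Proof.
move=> p0; have p20 : (0 < 2 * p)%N by rewrite muln_gt0.
rewrite /gR mulr_sumr (chiR_split _ _ p0).
rewrite -(sum_delta m (fun m' : 'I_p =>
   chiR (2 * p) (2 * m') t - chiR (2 * p) (2 * m').+1 t)).
apply: eq_bigr => m' _.
rewrite mulrBr !mulrDl !chiR_mul //.
have e1 : ((2 * m)%N == (2 * m').+1) = false by apply/eqP; lia.
have e2 : ((2 * m).+1 == (2 * m')%N) = false by apply/eqP; lia.
rewrite e1 e2.
case: (m =P m') => [->|h]; first by rewrite !eqxx; ring.
have e3 : ((2 * m)%N == (2 * m')%N) = false.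
  by apply/eqP => h'; apply: h; apply: val_inj => /=; lia.
have e4 : ((2 * m).+1 == (2 * m').+1) = false.
  by apply/eqP => h'; apply: h; apply: val_inj => /=; lia.
rewrite e3 e4.
ring.
Qed.

Lemma int_chiR_cellR p (m : 'I_p) s : (0 < p)%N ->
  mu.-integrable I01 (EFin \o (fun t => chiR p m t * cellR p s t)).
Proof.
move=> p0; have := int_scale (chiR p m s) (int_chiR p m).
by apply: eq_integrable => // t _ /=; rewrite chiR_cellR.
Qed.

Lemma int_chiR_gR p (m : 'I_p) : (0 < p)%N ->
  mu.-integrable I01 (EFin \o (fun t => chiR p m t * gR p t)).
Proof.
move=> p0; have := integrableB mI01 (int_chiR (2 * p) (2 * m)) (int_chiR (2 * p) (2 * m).+1).
by apply: eq_integrable => // t _ /=; rewrite chiR_gR.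
Qed.

Lemma Rint_chiR_cellR p (m : 'I_p) s : (0 < p)%N ->
  \int[mu]_(t in I01) (chiR p m t * cellR p s t) = chiR p m s * p%:R^-1.
Proof.
move=> p0; under eq_Rintegral do rewrite chiR_cellR //.
by rewrite RintZl ?int_chiR // Rint_chiR.
Qed.

Lemma Rint_chiR_gR p (m : 'I_p) : (0 < p)%N ->
  \int[mu]_(t in I01) (chiR p m t * gR p t) = 0.
Proof.
move=> p0; have p20 : (0 < 2 * p)%N by rewrite muln_gt0.
under eq_Rintegral do rewrite chiR_gR //.
rewrite RintegralB; [|exact: mI01|exact: int_chiR|exact: int_chiR].
have hm := ltn_ord m; rewrite !Rint_chiR ?subrr //; lia.
Qed.

Lemma le_int_nn (D : set (measurableTypeR R)) (f1 f2 : R -> \bar R) :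
  (forall x, D x -> 0 <= f1 x)%E -> (forall x, D x -> f1 x <= f2 x)%E ->
  (\int[mu]_(x in D) f1 x <= \int[mu]_(x in D) f2 x)%E.
Proof.
move=> h0 h12.
rewrite !ge0_integralE //; last by move=> x Dx; exact: le_trans (h0 x Dx) (h12 x Dx).
apply: ereal_sup_le => _ /= [h hh <-]; exists h => // x.
apply: le_trans (hh x) _.
rewrite /patch; case: ifP => // /set_mem Dx; exact: h12.
Qed.

Lemma muI01 : mu I01 = 1%E.
Proof.
have h := @lebesgue_measure_itv R `[0, 1[%R; move: h => /=; rewrite lte01 EFinN sube0 => h.
by rewrite h.
Qed.

Lemma eiint_ge0 n (f : n.-tuple R -> \bar R) :
  (forall y, in_cube y -> 0 <= f y)%E -> (0 <= eiint f)%E.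
Proof.
elim: n f => [|n IH] f h /=; first by apply: h; exact: in_cube0.
apply: integral_ge0 => t; rewrite /= in_itv /= => ht.
apply: IH => y hy; apply: h; exact/in_cube_cons.
Qed.

Lemma eiint_le n (f g : n.-tuple R -> \bar R) :
  (forall y, in_cube y -> 0 <= f y)%E -> (forall y, in_cube y -> f y <= g y)%E ->
  (eiint f <= eiint g)%E.
Proof.
elim: n f g => [|n IH] f g h0 h /=; first by apply: h; exact: in_cube0.
apply: le_int_nn => t; rewrite /= in_itv /= => ht.
  by apply: eiint_ge0 => y hy; apply: h0; exact/in_cube_cons.
by apply: IH => y hy; [apply: h0|apply: h]; exact/in_cube_cons.
Qed.

Lemma eiint_cst n (c : R) : eiint (fun _ : n.-tuple R => c%:E) = c%:E.
Proof.
elim: n => [|n IH] //=.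
under eq_integral do rewrite IH.
have := @integral_cst _ _ _ mu _ mI01 c%:E; rewrite /cst => ->.
by rewrite -[RHS]mule1; congr (_ * _)%E; exact: muI01.
Qed.

Lemma eiint_prod n (c : R) (psi : 'I_n -> R -> R) :
  0 <= c -> (forall l t, 0 <= psi l t) ->
  (forall l, mu.-integrable I01 (EFin \o psi l)) ->
  eiint (fun y => (c * \prod_l psi l (tnth y l))%:E) =
  (c * \prod_l \int[mu]_(t in I01) psi l t)%:E.
Proof.
elim: n c psi => [|n IH] c psi c0 hpos hint /=.
  by rewrite !big_ord0.
set K := \prod_(l < n) \int[mu]_(t in I01) psi (lift ord0 l) t.
have e : forall t, 0 <= psi ord0 t -> eiint (fun y : n.-tuple R =>
      (c * \prod_(l < n.+1) psi l (tnth (cons_tuple t y) l))%:E) =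
    ((c * K) * psi ord0 t)%:E.
  move=> t ht; rewrite -[X in _ = X%:E]mulrAC -(IH _ (fun l => psi (lift ord0 l))) //;
    last by rewrite mulr_ge0.
  congr eiint; apply/funext => y; congr EFin.
  rewrite big_ord_recl tnth_cons0 mulrA; congr (_ * _).
  by apply: eq_bigr => l _; rewrite tnth_consS.
under eq_integral do rewrite e //.
under eq_integral do rewrite EFinM.
rewrite integralZl; [|exact: mI01|exact: hint].
rewrite big_ord_recl -/K.
set J := Rintegral _ _ _.
rewrite (_ : c * (J * K) = (c * K) * J); last ring.
rewrite [RHS]EFinM; congr (_ * _)%E.
rewrite /J /Rintegral fineK //; exact: (integrable_fin_num mI01 (hint ord0)).
Qed.

Lemma chiE' p (i : nat) t : chi p i t = rc (chiR p i t).
Proof. exact: chiE. Qed.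

Lemma texpand N p (a : {set 'I_N}) (A' : N.-tuple R -> #|a|.-tuple R -> R[i])
  (c : N.-tuple 'I_p -> #|a|.-tuple 'I_p -> R[i])
  (hc : forall k x, in_cube k -> in_cube x ->
      A' k x = \sum_(ii : N.-tuple 'I_p) \sum_(jj : #|a|.-tuple 'I_p)
                c ii jj * (\prod_(j < N) chi p (tnth ii j) (tnth k j))
                        * (\prod_(j < #|a|) chi p (tnth jj j) (tnth x j)))
  (f : 'I_N -> R -> R)
  (hf : forall (jj : #|a|.-tuple 'I_p) l,
      mu.-integrable I01 (EFin \o (fun t => chiR p (tnth jj l) t * f (enum_val l) t)))
  k (hk : in_cube k) :
  cint (fun x => A' k x * rc (\prod_(i < N) f i (tnth (diamond k x) i))) =
  \sum_(jj : #|a|.-tuple 'I_p)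
     (\sum_(ii : N.-tuple 'I_p) c ii jj
         * rc (\prod_(j < N) chiR p (tnth ii j) (tnth k j))
         * rc (\prod_(i < N | i \notin a) f i (tnth k i)))
     * rc (\prod_(l < #|a|) \int[mu]_(t in I01)
             (chiR p (tnth jj l) t * f (enum_val l) t)).
Proof.
rewrite -(cint_prod _ hf); apply: cint_eq => x hx.
rewrite hc // diamond_prod.
rewrite mulr_suml; under eq_bigr do rewrite mulr_suml.
rewrite exchange_big /=; apply: eq_bigr => jj _.
rewrite mulr_suml; apply: eq_bigr => ii _.
under eq_bigr do rewrite chiE'.
under [X in _ * X * _]eq_bigr do rewrite chiE'.
rewrite -!rmorph_prod big_split /= !rmorphM /=.
ring.
Qed.

Lemma chiR_at q m t : (0 < q)%N -> chiR q m t = 1 ->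
  forall m', chiR q m' t = (m' == m)%:R.
Proof.
move=> q0 h m'; have := chiR_mul m' m t q0; rewrite h mulr1 => ->.
by case: eqP => [->|] //; rewrite h.
Qed.

Lemma sum_chiR p s : (0 < p)%N -> 0 <= s < 1 -> \sum_(m < p) chiR p m s = 1.
Proof.
move=> p0 hs; have [m0 h0] := chiR_cell p0 hs.
rewrite (bigD1 m0) //= h0 big1 ?addr0 // => m hm.
by rewrite (chiR_at p0 h0) (inj_eq val_inj) (negbTE hm).
Qed.

Lemma chiR_half p m t : (0 < p)%N -> chiR (2 * p) (2 * m) t = 1 -> chiR p m t = 1.
Proof.
move=> p0 h; rewrite (chiR_split _ _ p0) h.
have p20 : (0 < 2 * p)%N by rewrite muln_gt0.
rewrite (chiR_at p20 h) (_ : (_ == _) = false) ?addr0 //; apply/eqP; lia.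
Qed.

Lemma gR_at p (m : 'I_p) t : (0 < p)%N -> chiR (2 * p) (2 * m) t = 1 -> gR p t = 1.
Proof.
move=> p0 h; have p20 : (0 < 2 * p)%N by rewrite muln_gt0.
rewrite /gR (bigD1 m) //= !(chiR_at p20 h) eqxx.
rewrite (_ : ((2 * m).+1 == 2 * m)%N = false) ?subr0; last by apply/eqP; lia.
rewrite big1 ?addr0 // => m' hm'.
rewrite !(chiR_at p20 h) (_ : ((2 * m').+1 == 2 * m)%N = false); last by apply/eqP; lia.
rewrite (_ : ((2 * m')%N == 2 * m)%N = false) ?subr0 //.
apply/eqP => e; move/eqP: hm'; apply; apply: val_inj => /=; lia.
Qed.

Lemma norm_chiR_le1 q a t : `|chiR q a t| <= 1.
Proof. by case: (chiR01 q a t) => ->; rewrite ?normr0 ?normr1. Qed.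

Lemma cellR_bound p s t : `|cellR p s t| <= p%:R.
Proof.
rewrite /cellR; apply: le_trans (ler_norm_sum _ _ _) _.
rewrite -[X in _ <= X%:R]card_ord -sumr_const; apply: ler_sum => m _.
by rewrite normrM -[1]mulr1 ler_pM ?norm_chiR_le1.
Qed.

Lemma gR_bound p t : `|gR p t| <= p%:R.
Proof.
rewrite /gR; apply: le_trans (ler_norm_sum _ _ _) _.
rewrite -[X in _ <= X%:R]card_ord -sumr_const; apply: ler_sum => m _.
by case: (chiR01 (2 * p) (2 * m) t) => ->; case: (chiR01 (2 * p) (2 * m).+1 t) => ->;
  rewrite ?subrr ?subr0 ?sub0r ?normrN ?normr0 ?normr1.
Qed.

Lemma mcellR p s : measurable_fun setT (cellR p s).
Proof.
rewrite /cellR; apply: measurable_sum => m.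
by apply: measurable_funM; [exact: measurable_cst|exact: mchiR].
Qed.

Lemma mgR p : measurable_fun setT (gR p).
Proof.
rewrite /gR; apply: measurable_sum => m.
by apply: measurable_funB; exact: mchiR.
Qed.

Lemma Re_rc (x : R) : complex.Re (rc x) = x. Proof. by []. Qed.
Lemma Im_rc (x : R) : complex.Im (rc x) = 0. Proof. by []. Qed.
Lemma Re0 : complex.Re (0 : R[i]) = 0. Proof. by []. Qed.
Lemma Im0 : complex.Im (0 : R[i]) = 0. Proof. by []. Qed.

Lemma int_sumR (I : finType) (F : I -> R -> R) :
  (forall r, mu.-integrable I01 (EFin \o F r)) ->
  mu.-integrable I01 (EFin \o (fun t => \sum_r F r t)).
Proof.
move=> h; have := @integrable_sum _ _ _ mu _ mI01 I (index_enum I) xpredT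
  (fun r t => (F r t)%:E) (fun r _ => h r).
by apply: eq_integrable => // t _ /=; rewrite sumEFin.
Qed.

Lemma step N M p (hp : (0 < p)%N)
  (A : forall a : {set 'I_N}, N.-tuple R -> #|a|.-tuple R -> 'M[R[i]]_M)
  (hA : forall a, mx_staircase p (A a))
  (hop : forall u : N.-tuple R -> 'I_M -> R[i],
      inL2 u -> eiint (fun k => (sqnorm (opA A u k))%:E) = 0%E)
  (b : {set 'I_N})
  (IH : forall a : {set 'I_N}, (#|a| < #|b|)%N ->
      forall k x, in_cube k -> in_cube x -> A a k x = 0)
  k0 x0 (hk0 : in_cube k0) (hx0 : in_cube x0) i0 j0 :
  A b k0 x0 i0 j0 = 0.
Proof.
pose z := diamond k0 x0.
pose f := fun (i : 'I_N) (t : R) => if i \in b then cellR p (tnth z i) t else gR p t.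
pose u := fun (k : N.-tuple R) (j : 'I_M) =>
  if j == j0 then rc (\prod_i f i (tnth k i)) else 0.
pose Cc := (p%:R^-1)^+#|b| : R.
have hf : forall (a : {set 'I_N}) (jj : #|a|.-tuple 'I_p) l,
    mu.-integrable I01 (EFin \o (fun t => chiR p (tnth jj l) t * f (enum_val l) t)).
  move=> a jj l; rewrite /f; case: (enum_val l \in b).
    exact: int_chiR_cellR.
  exact: int_chiR_gR.
have hsum : forall (a : {set 'I_N}) k,
    (fun x : #|a|.-tuple R => \sum_j A a k x i0 j * u (diamond k x) j) =
    (fun x => A a k x i0 j0 * rc (\prod_i f i (tnth (diamond k x) i))).
  move=> a k; apply/funext => x; rewrite (bigD1 j0) // big1.
    by rewrite /u eqxx; exact: addr0.
  by move=> j /negbTE hj; rewrite /u hj mulr0.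
have claim2 : forall k, in_cube k -> opA A u k i0 =
    rc (Cc * \prod_(i < N | i \notin b) gR p (tnth k i)) * A b k x0 i0 j0.
  move=> k hk; rewrite /opA (bigD1 b) // big1; last first.
    move=> a; rewrite andTb => hab; rewrite hsum.
    case: (boolP (a \subset b)) => hsub.
      have hlt : (#|a| < #|b|)%N by apply: proper_card; rewrite finset.properEneq hab hsub.
      by apply: cint0 => x hx; rewrite IH // mxE mul0r.
    have /subsetPn [i ia ib] := hsub.
    have [c hc] := hA a i0 j0.
    rewrite (texpand hc (hf a) hk); apply: big1 => jj _.
    rewrite (bigD1 (enum_rank_in ia i)) //=.
    rewrite /f (enum_rankK_in ia ia) (negbTE ib) Rint_chiR_gR // mul0r rmorph0.
    exact: mulr0.
  apply: (etrans (addr0 _)); rewrite hsum.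
  have [c hc] := hA b i0 j0.
  rewrite (texpand hc (hf b) hk) (hc k x0 hk hx0).
  have hz : forall l : 'I_#|b|, tnth z (enum_val l) = tnth x0 l.
    by move=> l; rewrite /z tnth_mktuple enum_valP index_enum_val (tnth_nth 0).
  have hfac : forall (jj : #|b|.-tuple 'I_p) (l : 'I_#|b|),
      \int[mu]_(t in I01) (chiR p (tnth jj l) t * f (enum_val l) t) =
      chiR p (tnth jj l) (tnth x0 l) * p%:R^-1.
    move=> jj l; rewrite /f enum_valP hz; exact: Rint_chiR_cellR.
  have hout : \prod_(i < N | i \notin b) f i (tnth k i) =
      \prod_(i < N | i \notin b) gR p (tnth k i).
    by apply: eq_bigr => i /negbTE hi; rewrite /f hi.
  symmetry; rewrite mulr_sumr; under eq_bigr do rewrite mulr_sumr.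
  rewrite exchange_big /=; apply: eq_bigr => jj _.
  rewrite (eq_bigr _ (fun l _ => hfac jj l)) big_split /= prodr_const card_ord.
  rewrite mulr_suml; apply: eq_bigr => ii _.
  rewrite hout.
  under [X in _ * (_ * X * _) = _]eq_bigr do rewrite chiE'.
  under [X in _ * (_ * _ * X) = _]eq_bigr do rewrite chiE'.
  rewrite -!rmorph_prod !rmorphM /= /Cc.
  ring.
have mf : forall i, measurable_fun setT (f i).
  by move=> i; rewrite /f; case: (i \in b); [exact: mcellR|exact: mgR].
have hfb : forall i t, `|f i t| <= p%:R.
  by move=> i t; rewrite /f; case: (i \in b); [exact: cellR_bound|exact: gR_bound].
have hL2 : inL2 u.
  split.
    move=> j; rewrite /u; case: (j == j0); split => /=.
    - apply: measurable_prod => i _.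
      exact: measurableT_comp (mf i) (measurable_tnth i).
    - exact: measurable_cst.
    - exact: measurable_cst.
    - exact: measurable_cst.
  pose B := (p%:R ^+ N) ^+ 2 : R.
  apply: (le_lt_trans (y := eiint (fun _ : N.-tuple R => B%:E))); last by rewrite eiint_cst ltry.
  apply: eiint_le => k _; rewrite lee_fin.
    by apply: sumr_ge0 => j _; rewrite addr_ge0 // sqr_ge0.
  rewrite /sqnorm (bigD1 j0) // big1; last first.
    by move=> j /negbTE hj; rewrite /u hj Re0 Im0 expr2 mul0r addr0.
  rewrite /u eqxx Re_rc Im_rc.
  change ((\prod_i f i (tnth k i)) ^+ 2 + 0 ^+ 2 + 0 <= B).
  rewrite expr0n /= !addr0.
  have hX : `|\prod_i f i (tnth k i)| <= p%:R ^+ N.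
    rewrite normr_prod (le_trans (_ : _ <= \prod_(i < N) (p%:R : R))) //.
      by apply: ler_prod => i _; rewrite normr_ge0 hfb.
    by rewrite prodr_const card_ord.
  rewrite -real_normK ?num_real // /B !expr2.
  by apply: ler_pM => //; exact: normr_ge0.
have hzero := hop u hL2.
pose a := A b k0 x0 i0 j0.
pose psi := fun (i : 'I_N) (t : R) =>
  \sum_(m < p) chiR p m (tnth k0 i) * chiR (2 * p) (2 * m) t.
pose L := Cc ^+ 2 * (complex.Re a ^+ 2 + complex.Im a ^+ 2).
have p20 : (0 < 2 * p)%N by rewrite muln_gt0.
have hpsi0 : forall i t, 0 <= psi i t.
  by move=> i t; apply: sumr_ge0 => m _; rewrite mulr_ge0 ?chiR_ge0.
have hpsi1 : forall i t, psi i t <= 1.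
  move=> i t; rewrite -(sum_chiR hp (hk0 i)); apply: ler_sum => m _.
  by rewrite -[X in _ <= X]mulr1 ler_wpM2l ?chiR_ge0 ?chiR_le1.
have hpsiint : forall i, mu.-integrable I01 (EFin \o psi i).
  move=> i; apply: int_sumR => m; exact: int_scale (int_chiR _ _).
have hRpsi : forall i, \int[mu]_(t in I01) psi i t = (2 * p)%:R^-1.
  move=> i; rewrite Rint_sum; last by move=> m; exact: int_scale (int_chiR _ _).
  transitivity ((\sum_(m < p) chiR p m (tnth k0 i)) * (2 * p)%:R^-1);
    last by rewrite (sum_chiR hp (hk0 i)) mul1r.
  rewrite mulr_suml; apply: eq_bigr => m _.
  by rewrite RintZl ?int_chiR // Rint_chiR //; have := ltn_ord m; lia.
have L0 : 0 <= L by rewrite /L mulr_ge0 ?sqr_ge0 ?addr_ge0 // sqr_ge0.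
have hlow : forall k, in_cube k ->
    ((L * \prod_i psi i (tnth k i))%:E <= (sqnorm (opA A u k))%:E)%E.
  move=> k hk; rewrite lee_fin.
  have sq0 : 0 <= sqnorm (opA A u k).
    by apply: sumr_ge0 => j _; rewrite addr_ge0 // sqr_ge0.
  set P := \prod_i psi i (tnth k i).
  have P0 : 0 <= P by apply: prodr_ge0 => i _; exact: hpsi0.
  have P1 : P <= 1 by apply: prodr_ile1 => i _; rewrite hpsi0 hpsi1.
  have [->|hP] := eqVneq P 0; first by rewrite mulr0.
  have hall : forall i, exists m : 'I_p,
      chiR p m (tnth k0 i) = 1 /\ chiR (2 * p) (2 * m) (tnth k i) = 1.
    move=> i.
    have hpi : psi i (tnth k i) != 0.
      apply: contra hP => /eqP h0; apply/eqP; rewrite /P (bigD1 i) // h0.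
      exact: mul0r.
    have [m hm] : exists m : 'I_p,
        chiR p m (tnth k0 i) * chiR (2 * p) (2 * m) (tnth k i) != 0.
      apply/existsP; apply: contraNT hpi => /existsPn h; apply/eqP.
      by apply: big1 => m _; have := h m; rewrite negbK => /eqP.
    exists m; move: hm.
    case: (chiR01 p m (tnth k0 i)) => ->; rewrite ?mul0r ?eqxx // mul1r.
    by case: (chiR01 (2 * p) (2 * m) (tnth k i)) => ->; rewrite ?eqxx.
  have hg : forall i, gR p (tnth k i) = 1.
    by move=> i; have [m [_ h]] := hall i; exact: gR_at hp h.
  have hchi : forall i (m' : 'I_p), chi p m' (tnth k i) = chi p m' (tnth k0 i).
    move=> i m'; have [m [h1 h2]] := hall i.
    by rewrite !chiE' (chiR_at hp (chiR_half hp h2)) (chiR_at hp h1).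
  have ha : A b k x0 i0 j0 = a.
    have [c hc] := hA b i0 j0; rewrite /a !hc //.
    apply: eq_bigr => ii _; apply: eq_bigr => jj _; congr (_ * _ * _).
    by apply: eq_bigr => j _; exact: hchi.
  apply: le_trans (_ : L <= _); first by rewrite ler_piMr.
  have -> : L = complex.Re (rc Cc * a) ^+ 2 + complex.Im (rc Cc * a) ^+ 2.
    by rewrite mulrC Re_mul_rc Im_mul_rc /L; ring.
  rewrite /sqnorm (bigD1 i0) //.
  set S := \sum_(i | i != i0) _.
  have S0 : 0 <= S by apply: sumr_ge0 => j _; rewrite addr_ge0 // sqr_ge0.
  change (complex.Re (rc Cc * a) ^+ 2 + complex.Im (rc Cc * a) ^+ 2 <=
     complex.Re (opA A u k i0) ^+ 2 + complex.Im (opA A u k i0) ^+ 2 + S).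
  rewrite claim2 // (eq_bigr (fun _ => 1) (fun i _ => hg i)) big1_eq mulr1 ha.
  by rewrite lerDl.
have hnn : forall k, in_cube k -> (0 <= (L * \prod_i psi i (tnth k i))%:E)%E.
  by move=> k _; rewrite lee_fin mulr_ge0 // prodr_ge0.
have := eiint_le hnn hlow.
rewrite hzero eiint_prod //.
rewrite lee_fin (eq_bigr _ (fun i _ => hRpsi i)) prodr_const card_ord.
rewrite pmulr_lle0; last by rewrite exprn_gt0 // invr_gt0 ltr0n.
move=> hL; have /eqP : L = 0 by apply/eqP; rewrite eq_le hL L0.
rewrite /L mulf_eq0 expf_eq0 /Cc expf_eq0 invr_eq0 pnatr_eq0 (negbTE (lt0n_neq0 hp)).
rewrite !andbF orFb paddr_eq0 ?sqr_ge0 // !sqrf_eq0 => /andP[/eqP hre /eqP him].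
by apply: complex_ext; [exact: hre|exact: him].
Qed.
End S.

Unset Implicit Arguments.

Theorem lemma1 (R : realType) (N M p : nat) (hN : (0 < N)%N) (hM : (0 < M)%N)
    (hp : (0 < p)%N)
    (A : forall alpha : {set 'I_N},
           N.-tuple R -> #|alpha|.-tuple R -> 'M[R[i]]_M) :
  (forall alpha : {set 'I_N}, mx_staircase p (A alpha)) ->
  (forall u : N.-tuple R -> 'I_M -> R[i],
      inL2 u -> eiint (fun k => (sqnorm (opA A u k))%:E) = 0%E) ->
  forall (alpha : {set 'I_N}) (k : N.-tuple R) (x : #|alpha|.-tuple R),
    in_cube k -> in_cube x -> A alpha k x = 0.
Proof.
move=> hA hop.
suff H : forall n (a : {set 'I_N}), (#|a| < n)%N ->
    forall k x, in_cube k -> in_cube x -> A a k x = 0.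
  by move=> a k x hk hx; exact: (H _ a (ltnSn _) k x hk hx).
elim=> [//|n IHn] a ha k x hk hx.
apply/matrixP => i j; rewrite mxE.
apply: (step hp hA hop) => // a' ha' k' x' hk' hx'.
apply: IHn => //; exact: leq_trans ha' ha.
Qed.
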